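(* Let $r\in(-\infty,0)\cup(0,1)$, let $n\ge 2$, and let $Y$ be a positive semidefinite $n\times n$ matrix of rank one. Then the map $X\mapsto X^rYX^r$ from $\mathcal{P}_n$ to the $n\times n$ positive semidefinite matrices is not operator convex, i.e. there exist $X_1,X_2\in\mathcal{P}_n$ and $\lambda\in[0,1]$ such that $(\lambda X_1+(1-\lambda)X_2)^rY(\lambda X_1+(1-\lambda)X_2)^r\le \lambda X_1^rYX_1^r+(1-\lambda)X_2^rYX_2^r$ fails in the Loewner order.
   Context: $\mathcal{P}_n$ denotes the set of $n\times n$ positive definite complex matrices. *)

(* Defs.v *)
From Stdlib Require Import Reals ClassicalEpsilon.
Open Scope R_scope.

Record C := mkC { Re : R ; Im : R }.
Definition RtoC (x : R) : C := mkC x 0.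
Definition C0 : C := RtoC 0.
Definition C1 : C := RtoC 1.
Definition Cadd (a b : C) : C := mkC (Re a + Re b) (Im a + Im b).
Definition Copp (a : C) : C := mkC (- Re a) (- Im a).
Definition Cmul (a b : C) : C :=
  mkC (Re a * Re b - Im a * Im b) (Re a * Im b + Im a * Re b).
Definition Cconj (a : C) : C := mkC (Re a) (- Im a).

(* ---------- n x n complex matrices ----------
   A matrix is a function nat -> nat -> C; only the entries with
   indices < n are relevant (all operations sum over 0..n-1). *)
Definition Mat := nat -> nat -> C.
Definition Vec := nat -> C.

Fixpoint Csum (n : nat) (f : nat -> C) : C :=
  match n with O => C0 | S m => Cadd (Csum m f) (f m) end.

Definition madd (A B : Mat) : Mat := fun i j => Cadd (A i j) (B i j).
Definition msub (A B : Mat) : Mat := fun i j => Cadd (A i j) (Copp (B i j)).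
Definition mscale (c : R) (A : Mat) : Mat := fun i j => Cmul (RtoC c) (A i j).
Definition mmul (n : nat) (A B : Mat) : Mat :=
  fun i j => Csum n (fun k => Cmul (A i k) (B k j)).
Definition adj (A : Mat) : Mat := fun i j => Cconj (A j i).
Definition idm : Mat := fun i j => if Nat.eqb i j then C1 else C0.
Definition diagm (d : nat -> R) : Mat :=
  fun i j => if Nat.eqb i j then RtoC (d i) else C0.

Definition meq (n : nat) (A B : Mat) : Prop :=
  forall i j, (i < n)%nat -> (j < n)%nat -> A i j = B i j.

Definition quad (n : nat) (A : Mat) (x : Vec) : C :=
  Csum n (fun i => Csum n (fun j => Cmul (Cconj (x i)) (Cmul (A i j) (x j)))).

Definition vnonzero (n : nat) (x : Vec) : Prop := exists i, (i < n)%nat /\ x i <> C0.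

Definition psd (n : nat) (A : Mat) : Prop :=
  forall x : Vec, Im (quad n A x) = 0 /\ 0 <= Re (quad n A x).

Definition pd (n : nat) (A : Mat) : Prop :=
  forall x : Vec, Im (quad n A x) = 0 /\ (vnonzero n x -> 0 < Re (quad n A x)).

Definition loewner_le (n : nat) (A B : Mat) : Prop := psd n (msub B A).

Definition rank_one (n : nat) (Y : Mat) : Prop :=
  exists u w : Vec, vnonzero n u /\ vnonzero n w /\
    meq n Y (fun i j => Cmul (u i) (Cconj (w j))).

(* ---------- Real powers of positive definite matrices ----------
   Spectral decomposition X = U diag(d) U^* with U unitary and d > 0;
   X^r := U diag(d^r) U^*  (functional calculus; independent of the
   chosen decomposition). *)
Definition unitary (n : nat) (U : Mat) : Prop := meq n (mmul n (adj U) U) idm.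

Definition spec_decomp (n : nat) (X : Mat) (p : Mat * (nat -> R)) : Prop :=
  unitary n (fst p) /\ (forall i, (i < n)%nat -> 0 < snd p i) /\
  meq n X (mmul n (mmul n (fst p) (diagm (snd p))) (adj (fst p))).

Definition the_decomp (n : nat) (X : Mat) : Mat * (nat -> R) :=
  epsilon (inhabits (idm, fun _ => 1)) (spec_decomp n X).

Definition mpow (n : nat) (r : R) (X : Mat) : Mat :=
  let p := the_decomp n X in
  mmul n (mmul n (fst p) (diagm (fun i => Rpower (snd p i) r))) (adj (fst p)).

Definition sandwich (n : nat) (r : R) (Y X : Mat) : Mat :=
  mmul n (mmul n (mpow n r X) Y) (mpow n r X).

(* Main.v *)
Require Import Defs.
From Stdlib Require Import Reals Lra Lia Psatz Setoid Morphisms ClassicalEpsilon.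
Import Defs.
Open Scope R_scope.

Lemma C_eq (a b : C) : Re a = Re b -> Im a = Im b -> a = b.
Proof. destruct a, b; simpl; intros; subst; reflexivity. Qed.

Definition Csub a b := Cadd a (Copp b).

Lemma Cring : ring_theory C0 C1 Cadd Cmul Csub Copp (@eq C).
Proof.
  constructor; intros; apply C_eq; unfold Csub, C0, C1, RtoC; destruct x; try destruct y; try destruct z; simpl; ring.
Qed.
Add Ring Cring : Cring.

Lemma Cconj_add a b : Cconj (Cadd a b) = Cadd (Cconj a) (Cconj b).
Proof. apply C_eq; simpl; ring. Qed.
Lemma Cconj_mul a b : Cconj (Cmul a b) = Cmul (Cconj a) (Cconj b).
Proof. apply C_eq; simpl; ring. Qed.
Lemma Cconj_conj a : Cconj (Cconj a) = a.
Proof. apply C_eq; simpl; ring. Qed.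
Lemma Cconj_R x : Cconj (RtoC x) = RtoC x.
Proof. apply C_eq; simpl; ring. Qed.
Lemma Cconj_0 : Cconj C0 = C0.
Proof. apply C_eq; simpl; ring. Qed.
Lemma Cconj_1 : Cconj C1 = C1.
Proof. apply C_eq; simpl; ring. Qed.
Lemma RtoC_mul x y : RtoC (x*y) = Cmul (RtoC x) (RtoC y).
Proof. apply C_eq; simpl; ring. Qed.
Lemma RtoC_add x y : RtoC (x+y) = Cadd (RtoC x) (RtoC y).
Proof. apply C_eq; simpl; ring. Qed.
Lemma RtoC_opp x : RtoC (-x) = Copp (RtoC x).
Proof. apply C_eq; simpl; ring. Qed.
Lemma Cconj_opp a : Cconj (Copp a) = Copp (Cconj a).
Proof. apply C_eq; simpl; ring. Qed.

Lemma Csum_ext n f g : (forall k, (k < n)%nat -> f k = g k) -> Csum n f = Csum n g.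
Proof. induction n; simpl; intros H; auto. rewrite IHn by (intros; apply H; lia). rewrite H by lia; auto. Qed.
Lemma Csum_add n f g : Csum n (fun k => Cadd (f k) (g k)) = Cadd (Csum n f) (Csum n g).
Proof. induction n; simpl. apply C_eq; simpl; ring. rewrite IHn; ring. Qed.
Lemma Csum_mull n a f : Csum n (fun k => Cmul a (f k)) = Cmul a (Csum n f).
Proof. induction n; simpl. apply C_eq; simpl; ring. rewrite IHn; ring. Qed.
Lemma Csum_mulr n a f : Csum n (fun k => Cmul (f k) a) = Cmul (Csum n f) a.
Proof. induction n; simpl. apply C_eq; simpl; ring. rewrite IHn; ring. Qed.
Lemma Csum_opp n f : Csum n (fun k => Copp (f k)) = Copp (Csum n f).
Proof. induction n; simpl. apply C_eq; simpl; ring. rewrite IHn; ring. Qed.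
Lemma Csum_zero n f : (forall k, (k<n)%nat -> f k = C0) -> Csum n f = C0.
Proof. induction n; simpl; intros H; auto. rewrite IHn by (intros; apply H; lia). rewrite H by lia. ring. Qed.
Lemma Csum_conj n f : Cconj (Csum n f) = Csum n (fun k => Cconj (f k)).
Proof. induction n; simpl. apply Cconj_0. rewrite Cconj_add, IHn; auto. Qed.
Lemma Csum_swap n m f : Csum n (fun i => Csum m (fun j => f i j)) = Csum m (fun j => Csum n (fun i => f i j)).
Proof.
  induction n; simpl. symmetry; apply Csum_zero; auto.
  rewrite IHn. rewrite <- Csum_add. auto.
Qed.
Lemma Csum_one n i f : (i < n)%nat -> (forall k, (k<n)%nat -> k <> i -> f k = C0) -> Csum n f = f i.
Proof.
  induction n; intros Hi H; [lia|]. simpl.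
  destruct (Nat.eq_dec i n).
  - subst. rewrite Csum_zero by (intros; apply H; lia). ring.
  - rewrite IHn by (try lia; intros; apply H; lia). rewrite (H n) by lia. ring.
Qed.
Lemma Csum_two n i j f : (i < n)%nat -> (j < n)%nat -> i <> j ->
  (forall k, (k<n)%nat -> k <> i -> k <> j -> f k = C0) -> Csum n f = Cadd (f i) (f j).
Proof.
  induction n; intros Hi Hj Hij H; [lia|]. simpl.
  destruct (Nat.eq_dec i n); [|destruct (Nat.eq_dec j n)].
  - subst. rewrite (Csum_one n j) by (try lia; intros; apply H; lia). ring.
  - subst. rewrite (Csum_one n i) by (try lia; intros; apply H; lia). ring.
  - rewrite IHn by (try lia; intros; apply H; lia). rewrite (H n) by lia. ring.
Qed.
Lemma Csum_pos n f i : (forall k, (k<n)%nat -> Im (f k) = 0 /\ 0 <= Re (f k)) ->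
  (i < n)%nat -> 0 < Re (f i) -> Im (Csum n f) = 0 /\ 0 < Re (Csum n f).
Proof.
  induction n; intros H Hi Hp; [lia|]. simpl.
  assert (Hn := H n ltac:(lia)).
  assert (Hw : forall m, (m <= n)%nat -> Im (Csum m f) = 0 /\ 0 <= Re (Csum m f)).
  { induction m; intros; simpl. lra. destruct (IHm ltac:(lia)). destruct (H m ltac:(lia)). lra. }
  destruct (Nat.eq_dec i n).
  - subst. destruct (Hw n ltac:(lia)). lra.
  - destruct (IHn ltac:(intros; apply H; lia) ltac:(lia) Hp). lra.
Qed.

Definition veq (n : nat) (x y : Vec) : Prop := forall i, (i < n)%nat -> x i = y i.
Definition mv (n : nat) (A : Mat) (x : Vec) : Vec := fun i => Csum n (fun j => Cmul (A i j) (x j)).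
Definition dot (n : nat) (x y : Vec) : C := Csum n (fun i => Cmul (Cconj (x i)) (y i)).

Section MeqSetoid.
Variable n : nat.
Lemma meq_refl : Reflexive (meq n). Proof. intros A i j _ _; auto. Qed.
Lemma meq_sym : Symmetric (meq n). Proof. intros A B H i j Hi Hj; symmetry; auto. Qed.
Lemma meq_trans : Transitive (meq n). Proof. intros A B D H1 H2 i j Hi Hj; rewrite H1, H2; auto. Qed.
End MeqSetoid.
Add Parametric Relation n : Mat (meq n)
  reflexivity proved by (meq_refl n) symmetry proved by (meq_sym n)
  transitivity proved by (meq_trans n) as meq_rel.

Add Parametric Morphism n : (mmul n) with signature meq n ==> meq n ==> meq n as mmul_mor.
Proof. intros A A' HA B B' HB i j Hi Hj. unfold mmul. apply Csum_ext; intros. rewrite HA, HB; auto. Qed.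
Add Parametric Morphism n : adj with signature meq n ==> meq n as adj_mor.
Proof. intros A A' HA i j Hi Hj. unfold adj. rewrite HA; auto. Qed.
Add Parametric Morphism n : madd with signature meq n ==> meq n ==> meq n as madd_mor.
Proof. intros A A' HA B B' HB i j Hi Hj. unfold madd. rewrite HA, HB; auto. Qed.
Add Parametric Morphism n : msub with signature meq n ==> meq n ==> meq n as msub_mor.
Proof. intros A A' HA B B' HB i j Hi Hj. unfold msub. rewrite HA, HB; auto. Qed.
Add Parametric Morphism n c : (mscale c) with signature meq n ==> meq n as mscale_mor.
Proof. intros A A' HA i j Hi Hj. unfold mscale. rewrite HA; auto. Qed.
Add Parametric Morphism n : (quad n) with signature meq n ==> eq ==> eq as quad_mor.
Proof. intros A A' HA x. unfold quad. apply Csum_ext; intros. apply Csum_ext; intros. rewrite HA; auto. Qed.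

Lemma mmul_assoc n A B D : meq n (mmul n (mmul n A B) D) (mmul n A (mmul n B D)).
Proof.
  intros i j Hi Hj. unfold mmul.
  transitivity (Csum n (fun k => Csum n (fun l => Cmul (A i l) (Cmul (B l k) (D k j))))).
  { apply Csum_ext; intros. rewrite <- Csum_mulr. apply Csum_ext; intros. ring. }
  rewrite Csum_swap. apply Csum_ext; intros. rewrite <- Csum_mull. auto.
Qed.

Lemma mmul_idl n A : meq n (mmul n idm A) A.
Proof. intros i j Hi Hj. unfold mmul. rewrite (Csum_one n i) by (first [assumption | intros; unfold idm;
  destruct (Nat.eqb_spec i k); [lia|]; unfold C0, RtoC; apply C_eq; simpl; ring]).
  unfold idm. rewrite Nat.eqb_refl. unfold C1; apply C_eq; destruct (A i j); simpl; ring. Qed.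
Lemma mmul_idr n A : meq n (mmul n A idm) A.
Proof. intros i j Hi Hj. unfold mmul. rewrite (Csum_one n j) by (first [assumption | intros; unfold idm;
  destruct (Nat.eqb_spec k j); [lia|]; unfold C0, RtoC; apply C_eq; simpl; ring]).
  unfold idm. rewrite Nat.eqb_refl. unfold C1; apply C_eq; destruct (A i j); simpl; ring. Qed.

Lemma mmul_diagl n d A i j : (i < n)%nat -> mmul n (diagm d) A i j = Cmul (RtoC (d i)) (A i j).
Proof. intros Hi. unfold mmul. rewrite (Csum_one n i) by (first [assumption | intros; unfold diagm;
  destruct (Nat.eqb_spec i k); [lia|]; unfold C0, RtoC; apply C_eq; simpl; ring]).
  unfold diagm. rewrite Nat.eqb_refl. auto. Qed.
Lemma mmul_diagr n d A i j : (j < n)%nat -> mmul n A (diagm d) i j = Cmul (A i j) (RtoC (d j)).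
Proof. intros Hj. unfold mmul. rewrite (Csum_one n j) by (first [assumption | intros; unfold diagm;
  destruct (Nat.eqb_spec k j); [lia|]; unfold C0, RtoC; apply C_eq; simpl; ring]).
  unfold diagm. rewrite Nat.eqb_refl. auto. Qed.

Lemma adj_mmul n A B : meq n (adj (mmul n A B)) (mmul n (adj B) (adj A)).
Proof. intros i j Hi Hj. unfold adj, mmul. rewrite Csum_conj. apply Csum_ext; intros.
  rewrite Cconj_mul. ring. Qed.
Lemma adj_adj n A : meq n (adj (adj A)) A.
Proof. intros i j Hi Hj. unfold adj. apply Cconj_conj. Qed.
Lemma adj_diag n d : meq n (adj (diagm d)) (diagm d).
Proof. intros i j Hi Hj. unfold adj, diagm. rewrite Nat.eqb_sym.
  destruct (Nat.eqb j i) eqn:E. apply Nat.eqb_eq in E; subst. rewrite Nat.eqb_refl. apply Cconj_R. rewrite Nat.eqb_sym, E. apply Cconj_0. Qed.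

Lemma diag_mul n a b : meq n (mmul n (diagm a) (diagm b)) (diagm (fun k => a k * b k)).
Proof. intros i j Hi Hj. rewrite mmul_diagl by auto. unfold diagm.
  destruct (Nat.eqb_spec i j). subst. rewrite RtoC_mul; auto. apply C_eq; simpl; ring. Qed.
Lemma diag_one : diagm (fun _ => 1) = idm.
Proof. reflexivity. Qed.

Lemma cancel_l n V Z : meq n (mmul n (adj V) V) idm -> meq n (mmul n (adj V) (mmul n V Z)) Z.
Proof. intros H. rewrite <- mmul_assoc, H. apply mmul_idl. Qed.
Lemma cancel_l' n V Z : meq n (mmul n V (adj V)) idm -> meq n (mmul n V (mmul n (adj V) Z)) Z.
Proof. intros H. rewrite <- mmul_assoc, H. apply mmul_idl. Qed.

Lemma mv_mmul n A B x : veq n (mv n (mmul n A B) x) (mv n A (mv n B x)).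
Proof. intros i Hi. unfold mv, mmul.
  transitivity (Csum n (fun j => Csum n (fun k => Cmul (A i k) (Cmul (B k j) (x j))))).
  { apply Csum_ext; intros. rewrite <- Csum_mulr. apply Csum_ext; intros. ring. }
  rewrite Csum_swap. apply Csum_ext; intros. rewrite <- Csum_mull. auto. Qed.
Lemma mv_ext n A B x y : meq n A B -> veq n x y -> veq n (mv n A x) (mv n B y).
Proof. intros HA Hx i Hi. unfold mv. apply Csum_ext; intros. rewrite HA, Hx; auto. Qed.
Lemma dot_ext n x x' y y' : veq n x x' -> veq n y y' -> dot n x y = dot n x' y'.
Proof. intros H1 H2. unfold dot. apply Csum_ext; intros. rewrite H1, H2; auto. Qed.
Lemma quad_dot n A x : quad n A x = dot n x (mv n A x).
Proof. unfold quad, dot, mv. apply Csum_ext; intros. rewrite <- Csum_mull. apply Csum_ext; intros. auto. Qed.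
Lemma dot_adj n A x y : dot n x (mv n A y) = dot n (mv n (adj A) x) y.
Proof. unfold dot, mv, adj.
  transitivity (Csum n (fun i => Csum n (fun j => Cmul (Cconj (x i)) (Cmul (A i j) (y j))))).
  { apply Csum_ext; intros. rewrite <- Csum_mull. auto. }
  rewrite Csum_swap. apply Csum_ext; intros. rewrite Csum_conj, <- Csum_mulr. apply Csum_ext; intros.
  rewrite Cconj_mul, Cconj_conj. ring. Qed.
Lemma mv_diag n d x : veq n (mv n (diagm d) x) (fun k => Cmul (RtoC (d k)) (x k)).
Proof. intros i Hi. unfold mv. rewrite (Csum_one n i) by (first [assumption | intros; unfold diagm;
  destruct (Nat.eqb_spec i k); [lia|]; unfold C0, RtoC; apply C_eq; simpl; ring]).
  unfold diagm. rewrite Nat.eqb_refl. auto. Qed.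
Lemma mv_id n x : veq n (mv n idm x) x.
Proof. intros i Hi. unfold mv. rewrite (Csum_one n i) by (first [assumption | intros; unfold idm;
  destruct (Nat.eqb_spec i k); [lia|]; unfold C0, RtoC; apply C_eq; simpl; ring]).
  unfold idm. rewrite Nat.eqb_refl. unfold C1; apply C_eq; destruct (x i); simpl; ring. Qed.
Lemma veq_trans n x y z : veq n x y -> veq n y z -> veq n x z.
Proof. intros H1 H2 i Hi; rewrite H1, H2; auto. Qed.
Lemma veq_sym n x y : veq n x y -> veq n y x.
Proof. intros H1 i Hi; rewrite H1; auto. Qed.

Lemma quad_madd n A B x : quad n (madd A B) x = Cadd (quad n A x) (quad n B x).
Proof. unfold quad, madd. rewrite <- Csum_add. apply Csum_ext; intros. rewrite <- Csum_add. apply Csum_ext; intros. ring. Qed.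
Lemma quad_msub n A B x : quad n (msub A B) x = Cadd (quad n A x) (Copp (quad n B x)).
Proof. unfold quad, msub. rewrite <- Csum_opp, <- Csum_add. apply Csum_ext; intros. rewrite <- Csum_opp, <- Csum_add. apply Csum_ext; intros. ring. Qed.
Lemma quad_mscale n c A x : quad n (mscale c A) x = Cmul (RtoC c) (quad n A x).
Proof. unfold quad, mscale. rewrite <- Csum_mull. apply Csum_ext; intros. rewrite <- Csum_mull. apply Csum_ext; intros. ring. Qed.

Lemma RC_zero x w : Cmul (RtoC x) w = C0 -> w <> C0 -> x = 0.
Proof. intros H Hw. destruct w as [w1 w2]. unfold RtoC, C0, Cmul in H; simpl in H.
  injection H; intros. destruct (Req_dec x 0); auto. exfalso; apply Hw.
  apply C_eq; simpl. apply (Rmult_eq_reg_l x); [lra|auto]. apply (Rmult_eq_reg_l x); [lra|auto]. Qed.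

Lemma funcalc_unique n r X U d V e :
  meq n (mmul n (adj U) U) idm -> meq n (mmul n U (adj U)) idm -> (forall k, (k<n)%nat -> 0 < d k) ->
  meq n X (mmul n (mmul n U (diagm d)) (adj U)) ->
  meq n (mmul n (adj V) V) idm -> (forall k, (k<n)%nat -> 0 < e k) ->
  meq n X (mmul n (mmul n V (diagm e)) (adj V)) ->
  meq n (mmul n (mmul n V (diagm (fun k => Rpower (e k) r))) (adj V))
        (mmul n (mmul n U (diagm (fun k => Rpower (d k) r))) (adj U)).
Proof.
  intros HU1 HU2 Hd HXU HV1 He HXV.
  assert (HEW : meq n (mmul n (diagm e) (mmul n (adj V) U)) (mmul n (mmul n (adj V) U) (diagm d))).
  { transitivity (mmul n (adj V) (mmul n X U)).
    - rewrite HXV, !mmul_assoc, cancel_l by exact HV1. reflexivity.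
    - rewrite HXU, !mmul_assoc, HU1, mmul_idr. reflexivity. }
  set (W := mmul n (adj V) U) in *.
  assert (HEWr : meq n (mmul n (diagm (fun k => Rpower (e k) r)) W) (mmul n W (diagm (fun k => Rpower (d k) r)))).
  { intros k l Hk Hl. specialize (HEW k l Hk Hl). rewrite mmul_diagl in * by auto. rewrite mmul_diagr in * by auto.
    destruct (classic (W k l = C0)) as [H0|H0].
    - rewrite H0. apply C_eq; simpl; ring.
    - assert (Hkl : e k - d l = 0).
      { apply (RC_zero _ (W k l)); auto. unfold Rminus; rewrite RtoC_add, RtoC_opp.
        transitivity (Cadd (Cmul (RtoC (e k)) (W k l)) (Copp (Cmul (W k l) (RtoC (d l))))); [ring|].
        rewrite HEW. ring. }
      replace (e k) with (d l) by lra. ring. }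
  assert (HXi : meq n (mmul n X (mmul n (mmul n U (diagm (fun k => / d k))) (adj U))) idm).
  { rewrite HXU, !mmul_assoc, cancel_l by exact HU1.
    rewrite <- (mmul_assoc n (diagm d)), diag_mul.
    assert (Hid : meq n (diagm (fun k => d k * / d k)) idm).
    { intros i j Hi Hj. unfold diagm, idm. rewrite Rinv_r by (specialize (Hd i Hi); lra). reflexivity. }
    rewrite Hid, mmul_idl. exact HU2. }
  set (Xi := mmul n (mmul n U (diagm (fun k => / d k))) (adj U)) in *.
  assert (HV2 : meq n (mmul n V (adj V)) idm).
  { transitivity (mmul n (mmul n V (adj V)) (mmul n X Xi)).
    - rewrite HXi, mmul_idr. reflexivity.
    - rewrite <- HXi. rewrite HXV. rewrite !mmul_assoc. rewrite cancel_l by exact HV1. reflexivity. }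
  transitivity (mmul n (mmul n (mmul n V (diagm (fun k => Rpower (e k) r))) (adj V)) (mmul n U (adj U))).
  { rewrite HU2, mmul_idr. reflexivity. }
  rewrite !mmul_assoc.
  rewrite <- (mmul_assoc n (adj V) U). fold W.
  rewrite <- (mmul_assoc n (diagm (fun k => Rpower (e k) r)) W).
  rewrite HEWr. unfold W. rewrite !mmul_assoc. rewrite <- (mmul_assoc n V (adj V)), HV2, mmul_idl. reflexivity.
Qed.

Lemma mpow_unique n r X U d :
  meq n (mmul n (adj U) U) idm -> meq n (mmul n U (adj U)) idm -> (forall k, (k<n)%nat -> 0 < d k) ->
  meq n X (mmul n (mmul n U (diagm d)) (adj U)) ->
  meq n (mpow n r X) (mmul n (mmul n U (diagm (fun k => Rpower (d k) r))) (adj U)).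
Proof.
  intros HU1 HU2 Hd HX. unfold mpow, the_decomp.
  destruct (epsilon_spec (inhabits (idm, fun _ => 1)) (spec_decomp n X)) as [HV1 [He HXV]].
  { exists (U, d). split; [exact HU1|split; auto]. }
  eapply funcalc_unique; eauto.
Qed.

Definition evec (j : nat) : Vec := fun k => if k =? j then C1 else C0.
Lemma mv_evec n A i j : (j < n)%nat -> mv n A (evec j) i = A i j.
Proof. intros Hj. unfold mv. rewrite (Csum_one n j); auto.
  - unfold evec. rewrite Nat.eqb_refl. unfold C1; apply C_eq; destruct (A i j); simpl; ring.
  - intros k Hk Hne. unfold evec. destruct (Nat.eqb_spec k j); [lia|]. apply C_eq; simpl; ring. Qed.
Lemma meq_of_mv n A B : (forall x, veq n (mv n A x) (mv n B x)) -> meq n A B.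
Proof. intros H i j Hi Hj. rewrite <- !(mv_evec n _ i j Hj). apply H; auto. Qed.

Definition Umat (i j : nat) (c s : R) : Mat := fun k l =>
  if k =? i then (if l =? i then RtoC c else if l =? j then RtoC s else C0)
  else if k =? j then (if l =? i then RtoC s else if l =? j then RtoC (-c) else C0)
  else if k =? l then C1 else C0.

Ltac eqbs := repeat match goal with
  | |- context [Nat.eqb ?a ?b] => destruct (Nat.eqb_spec a b); try subst; try lia
  | H : context [Nat.eqb ?a ?b] |- _ => destruct (Nat.eqb_spec a b); try subst; try lia
  end.

Definition Uvec (i j : nat) (c s : R) (x : Vec) : Vec := fun k =>
  if k =? i then Cadd (Cmul (RtoC c) (x i)) (Cmul (RtoC s) (x j))
  else if k =? j then Cadd (Cmul (RtoC s) (x i)) (Copp (Cmul (RtoC c) (x j)))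
  else x k.

Lemma mv_U n i j c s x : (i < n)%nat -> (j < n)%nat -> i <> j ->
  veq n (mv n (Umat i j c s) x) (Uvec i j c s x).
Proof.
  intros Hi Hj Hij k Hk. unfold mv, Uvec.
  destruct (Nat.eqb_spec k i); [|destruct (Nat.eqb_spec k j)].
  - subst. rewrite (Csum_two n i j); auto.
    + unfold Umat. eqbs. auto.
    + intros m Hm H1 H2. unfold Umat. eqbs. apply C_eq; simpl; ring.
  - subst. rewrite (Csum_two n i j); auto.
    + unfold Umat. eqbs. rewrite RtoC_opp. ring.
    + intros m Hm H1 H2. unfold Umat. eqbs. apply C_eq; simpl; ring.
  - rewrite (Csum_one n k); auto.
    + unfold Umat. eqbs. unfold C1; apply C_eq; destruct (x k); simpl; ring.
    + intros m Hm H1. unfold Umat. eqbs; apply C_eq; simpl; ring.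
Qed.

Lemma adj_U n i j c s : meq n (adj (Umat i j c s)) (Umat i j c s).
Proof. intros k l Hk Hl. unfold adj, Umat. eqbs; try apply Cconj_R; try apply Cconj_0; try apply Cconj_1. Qed.

Lemma UU n i j c s : (i < n)%nat -> (j < n)%nat -> i <> j -> c*c + s*s = 1 ->
  meq n (mmul n (Umat i j c s) (Umat i j c s)) idm.
Proof.
  intros Hi Hj Hij Hcs. apply meq_of_mv. intros x.
  eapply veq_trans. apply mv_mmul.
  eapply veq_trans. apply mv_ext. reflexivity. apply mv_U; auto.
  eapply veq_trans. apply mv_U; auto.
  apply veq_sym. eapply veq_trans. apply mv_id.
  intros k Hk. unfold Uvec. eqbs; try reflexivity;
  destruct (x i) as [a1 a2], (x j) as [b1 b2]; 
  assert (E1: a1*(c*c+s*s) = a1) by (rewrite Hcs; ring);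
  assert (E2: a2*(c*c+s*s) = a2) by (rewrite Hcs; ring);
  assert (E3: b1*(c*c+s*s) = b1) by (rewrite Hcs; ring);
  assert (E4: b2*(c*c+s*s) = b2) by (rewrite Hcs; ring);
  apply C_eq; simpl; nra.
Qed.

Lemma U_unitary n i j c s : (i < n)%nat -> (j < n)%nat -> i <> j -> c*c + s*s = 1 ->
  meq n (mmul n (adj (Umat i j c s)) (Umat i j c s)) idm /\ meq n (mmul n (Umat i j c s) (adj (Umat i j c s))) idm.
Proof. intros. rewrite adj_U. split; apply UU; auto. Qed.

Definition Xof (n : nat) (U : Mat) (d : nat -> R) : Mat := mmul n (mmul n U (diagm d)) (adj U).

Lemma mv_zero n A x : veq n x (fun _ => C0) -> veq n (mv n A x) (fun _ => C0).
Proof. intros H i Hi. unfold mv. apply Csum_zero. intros k Hk. rewrite H by auto. apply C_eq; simpl; ring. Qed.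

Lemma pd_X n U d : meq n (mmul n (adj U) U) idm -> meq n (mmul n U (adj U)) idm ->
  (forall k, (k<n)%nat -> 0 < d k) -> pd n (Xof n U d).
Proof.
  intros HU1 HU2 Hd x. unfold Xof. rewrite quad_dot.
  set (y := mv n (adj U) x).
  assert (Hq : dot n x (mv n (mmul n (mmul n U (diagm d)) (adj U)) x) =
               Csum n (fun k => Cmul (Cconj (y k)) (Cmul (RtoC (d k)) (y k)))).
  { rewrite (dot_ext n x x _ (mv n U (mv n (diagm d) y))).
    - rewrite dot_adj. unfold dot. apply Csum_ext; intros k Hk. rewrite mv_diag by auto. reflexivity.
    - intros i; auto.
    - eapply veq_trans. apply mv_mmul. apply mv_mmul. }
  rewrite Hq.
  assert (Hterm : forall k, (k<n)%nat -> Im (Cmul (Cconj (y k)) (Cmul (RtoC (d k)) (y k))) = 0 /\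
     0 <= Re (Cmul (Cconj (y k)) (Cmul (RtoC (d k)) (y k))) /\
     (y k <> C0 -> 0 < Re (Cmul (Cconj (y k)) (Cmul (RtoC (d k)) (y k))))).
  { intros k Hk. specialize (Hd k Hk). destruct (y k) as [a b]. simpl. split; [ring|]. split; [nra|].
    intros Hne. assert (a <> 0 \/ b <> 0). { destruct (Req_dec a 0), (Req_dec b 0); auto. subst. exfalso; apply Hne; reflexivity. }
    destruct H; [assert (0 < a*a) by (apply Rsqr_pos_lt; auto)|assert (0 < b*b) by (apply Rsqr_pos_lt; auto)]; nra. }
  split.
  - assert (forall m, (m <= n)%nat -> Im (Csum m (fun k => Cmul (Cconj (y k)) (Cmul (RtoC (d k)) (y k)))) = 0).
    { induction m; intros; simpl. auto. rewrite IHm by lia. destruct (Hterm m ltac:(lia)). lra. }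
    auto.
  - intros [i [Hi Hxi]].
    destruct (classic (exists k, (k<n)%nat /\ y k <> C0)) as [[k [Hk Hyk]]|Hno].
    + eapply Csum_pos; eauto. intros; destruct (Hterm k0); tauto. apply Hterm; auto.
    + exfalso. apply Hxi.
      assert (Hy0 : veq n y (fun _ => C0)). { intros k Hk. destruct (classic (y k = C0)); auto. exfalso; eauto. }
      assert (H1 := mv_zero n U y Hy0 i Hi).
      assert (H2 : veq n (mv n U y) x).
      { unfold y. eapply veq_trans. apply veq_sym. apply mv_mmul.
        eapply veq_trans. apply mv_ext. exact HU2. intros k; auto. apply mv_id. }
      rewrite <- H2 by auto. exact H1.
Qed.

Lemma X_lin n U a b lam mu : meq n (madd (mscale lam (Xof n U a)) (mscale mu (Xof n U b)))
   (Xof n U (fun k => lam * a k + mu * b k)).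
Proof.
  intros i j Hi Hj. unfold madd, mscale, Xof. unfold mmul at 1 3 5.
  rewrite <- !Csum_mull, <- Csum_add. apply Csum_ext; intros m Hm.
  rewrite !mmul_diagr by auto. rewrite RtoC_add, !RtoC_mul. ring.
Qed.

Lemma quad_PYP n P Y z : meq n (adj P) P -> quad n (mmul n (mmul n P Y) P) z = quad n Y (mv n P z).
Proof.
  intros HP. rewrite !quad_dot.
  rewrite (dot_ext n z z _ (mv n P (mv n Y (mv n P z)))).
  - rewrite dot_adj. apply dot_ext. apply mv_ext; auto. intros k; auto. intros k; auto.
  - intros k; auto.
  - eapply veq_trans. apply mv_mmul. apply mv_mmul.
Qed.

Lemma quad_rank1 n Y u w x : meq n Y (fun i j => Cmul (u i) (Cconj (w j))) ->
  quad n Y x = Cmul (dot n x u) (dot n w x).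
Proof.
  intros HY. rewrite HY. unfold quad, dot. rewrite <- Csum_mulr. apply Csum_ext; intros i Hi.
  rewrite <- !Csum_mull. apply Csum_ext; intros. ring.
Qed.

Lemma dot_scale n w u c x : veq n w (fun k => Cmul (RtoC c) (u k)) -> dot n w x = Cmul (RtoC c) (Cconj (dot n x u)).
Proof. intros H. unfold dot. rewrite Csum_conj, <- Csum_mull. apply Csum_ext; intros k Hk. rewrite H by auto.
  rewrite !Cconj_mul, Cconj_conj, Cconj_R. ring. Qed.

Lemma dot_U n U v u : meq n (adj (adj U)) U -> dot n (mv n U v) u = dot n v (mv n (adj U) u).
Proof. intros H. rewrite dot_adj. apply dot_ext; [apply mv_ext; [symmetry; exact H| intros k0 _; reflexivity] | intros k0 _; reflexivity]. Qed.

Definition normC (a : C) : R := Re a * Re a + Im a * Im a.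

Definition zeta (i j : nat) (si sj : R) (l : Vec) : Vec := fun k =>
  if k =? i then Cmul (RtoC (si / normC (l i))) (l i)
  else if k =? j then Cmul (RtoC (sj / normC (l j))) (l j) else C0.

Lemma conj_norm g s a : a <> C0 ->
  Cmul (Cconj (Cmul (RtoC g) (Cmul (RtoC (s / normC a)) a))) a = RtoC (g * s).
Proof.
  intros Ha. destruct a as [a1 a2]. unfold normC; simpl.
  assert (0 < a1*a1 + a2*a2).
  { destruct (Req_dec a1 0), (Req_dec a2 0). subst. exfalso; apply Ha; reflexivity.
    all: try (assert (0 < a1*a1) by (apply Rsqr_pos_lt; auto)); try (assert (0 < a2*a2) by (apply Rsqr_pos_lt; auto)); nra. }
  apply C_eq; simpl; field; lra.
Qed.

Lemma quad_S n r i j cc ss Y u w c si sj d :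
  (i < n)%nat -> (j < n)%nat -> i <> j -> cc*cc + ss*ss = 1 ->
  meq n Y (fun a b => Cmul (u a) (Cconj (w b))) ->
  veq n w (fun k => Cmul (RtoC c) (u k)) ->
  mv n (adj (Umat i j cc ss)) u i <> C0 -> mv n (adj (Umat i j cc ss)) u j <> C0 ->
  (forall k, (k<n)%nat -> 0 < d k) ->
  forall X, meq n X (Xof n (Umat i j cc ss) d) ->
  quad n (sandwich n r Y X) (mv n (Umat i j cc ss) (zeta i j si sj (mv n (adj (Umat i j cc ss)) u))) =
  RtoC (c * (Rpower (d i) r * si + Rpower (d j) r * sj) ^ 2).
Proof.
  intros Hi Hj Hij Hcs HY Hw Hli Hlj Hd X HX.
  set (U := Umat i j cc ss) in *. set (l := mv n (adj U) u) in *.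
  set (z := zeta i j si sj l).
  destruct (U_unitary n i j cc ss Hi Hj Hij Hcs) as [HU1 HU2]. fold U in HU1, HU2.
  set (g := fun k => Rpower (d k) r).
  assert (HP := mpow_unique n r X U d HU1 HU2 Hd HX). fold g in HP.
  unfold sandwich. rewrite HP.
  assert (HadjP : meq n (adj (Xof n U g)) (Xof n U g)).
  { unfold Xof. rewrite adj_mmul, adj_adj, adj_mmul, adj_diag, mmul_assoc. reflexivity. }
  rewrite quad_PYP by exact HadjP.
  rewrite (quad_rank1 n Y u w) by exact HY.
  rewrite (dot_scale n w u c) by exact Hw.
  assert (HL : dot n (mv n (Xof n U g) (mv n U z)) u = RtoC (g i * si + g j * sj)).
  { rewrite (dot_ext n _ (mv n U (mv n (diagm g) z)) u u).
    - rewrite dot_U by apply adj_adj. unfold dot.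
      rewrite (Csum_two n i j); auto.
      + rewrite !mv_diag by auto. unfold z, zeta, l. rewrite Nat.eqb_refl.
        destruct (Nat.eqb_spec j i); [lia|]. rewrite Nat.eqb_refl.
        rewrite !conj_norm by auto. rewrite RtoC_add. reflexivity.
      + intros k Hk H1 H2. rewrite mv_diag by auto. unfold z, zeta.
        destruct (Nat.eqb_spec k i); [lia|]. destruct (Nat.eqb_spec k j); [lia|].
        apply C_eq; simpl; ring.
    - unfold Xof. eapply veq_trans. apply mv_mmul. eapply veq_trans. apply mv_mmul.
      apply mv_ext. reflexivity.
      eapply veq_trans. apply mv_ext. reflexivity.
      eapply veq_trans. apply veq_sym. apply mv_mmul. eapply veq_trans. apply mv_ext. exact HU1.
      intros k _; reflexivity. apply mv_id. intros k _; reflexivity.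
    - intros k _; reflexivity. }
  unfold Xof in HL. rewrite HL, Cconj_R. unfold g. apply C_eq; simpl; ring.
Qed.

Definition vec2 (i k : nat) (a b : C) : Vec := fun m => if m =? i then a else if m =? k then b else C0.

Lemma dot_vec2_l n i k a b y : (i<n)%nat -> (k<n)%nat -> i <> k ->
  dot n (vec2 i k a b) y = Cadd (Cmul (Cconj a) (y i)) (Cmul (Cconj b) (y k)).
Proof. intros. unfold dot. rewrite (Csum_two n i k); auto.
  - unfold vec2. rewrite Nat.eqb_refl. destruct (Nat.eqb_spec k i); [lia|]. rewrite Nat.eqb_refl. auto.
  - intros m Hm Hm1 Hm2. unfold vec2. destruct (Nat.eqb_spec m i); [lia|]. destruct (Nat.eqb_spec m k); [lia|].
    apply C_eq; simpl; ring. Qed.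
Lemma dot_vec2_r n i k a b y : (i<n)%nat -> (k<n)%nat -> i <> k ->
  dot n y (vec2 i k a b) = Cadd (Cmul (Cconj (y i)) a) (Cmul (Cconj (y k)) b).
Proof. intros. unfold dot. rewrite (Csum_two n i k); auto.
  - unfold vec2. rewrite Nat.eqb_refl. destruct (Nat.eqb_spec k i); [lia|]. rewrite Nat.eqb_refl. auto.
  - intros m Hm Hm1 Hm2. unfold vec2. destruct (Nat.eqb_spec m i); [lia|]. destruct (Nat.eqb_spec m k); [lia|].
    apply C_eq; simpl; ring. Qed.

Definition Ci : C := mkC 0 1.

Lemma rank1_psd_pair n Y u w i k : psd n Y -> meq n Y (fun a b => Cmul (u a) (Cconj (w b))) ->
  (i<n)%nat -> (k<n)%nat -> i <> k -> u i <> C0 ->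
  let t := Re (u i) * Re (w i) + Im (u i) * Im (w i) in
  let N := normC (u i) in
  0 <= t /\ w i = Cmul (RtoC (t / N)) (u i) /\ w k = Cmul (RtoC (t / N)) (u k).
Proof.
  intros Hpsd HY Hi Hk Hik Hu t N.
  assert (Q : forall a b, quad n Y (vec2 i k a b) =
     Cmul (Cadd (Cmul (Cconj a) (u i)) (Cmul (Cconj b) (u k))) (Cadd (Cmul (Cconj (w i)) a) (Cmul (Cconj (w k)) b))).
  { intros. rewrite (quad_rank1 n Y u w) by auto. rewrite dot_vec2_l, dot_vec2_r; auto. }
  destruct (Hpsd (vec2 i k C1 C0)) as [E0 T0]. rewrite Q in E0, T0.
  destruct (Hpsd (vec2 i k C0 C1)) as [E1 _]. rewrite Q in E1.
  destruct (Hpsd (vec2 i k C1 C1)) as [E2 _]. rewrite Q in E2.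
  destruct (Hpsd (vec2 i k C1 Ci)) as [E3 _]. rewrite Q in E3.
  unfold t, N, normC in *. clear Q Hpsd HY.
  destruct (u i) as [a1 a2], (w i) as [A1 A2], (u k) as [b1 b2], (w k) as [B1 B2].
  simpl in *.
  assert (HN : 0 < a1*a1 + a2*a2).
  { destruct (Req_dec a1 0), (Req_dec a2 0). subst. exfalso; apply Hu; reflexivity.
    all: try (assert (0 < a1*a1) by (apply Rsqr_pos_lt; auto)); try (assert (0 < a2*a2) by (apply Rsqr_pos_lt; auto)); nra. }
  ring_simplify in E0. ring_simplify in T0. ring_simplify in E1. ring_simplify in E2. ring_simplify in E3.
  assert (Hs : a2*A1 - a1*A2 = 0) by nra.
  assert (He1 : b1*A1+b2*A2 - a1*B1 - a2*B2 = 0) by nra.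
  assert (He2 : b2*A1 - b1*A2 + a2*B1 - a1*B2 = 0) by nra.
  split; [nra|]. split.
  - apply C_eq; simpl.
    + assert (G : A1*(a1*a1+a2*a2) = (a1*A1+a2*A2)*a1 + a2*(a2*A1 - a1*A2)) by ring.
      rewrite Hs in G. apply (Rmult_eq_reg_r (a1*a1+a2*a2)); [|lra]. rewrite G. field; lra.
    + assert (G : A2*(a1*a1+a2*a2) = (a1*A1+a2*A2)*a2 - a1*(a2*A1 - a1*A2)) by ring.
      rewrite Hs in G. apply (Rmult_eq_reg_r (a1*a1+a2*a2)); [|lra]. rewrite G. field; lra.
  - apply C_eq; simpl.
    + assert (G : B1*(a1*a1+a2*a2) = (a1*A1+a2*A2)*b1 - (a2*A1 - a1*A2)*b2 - (a1*(b1*A1+b2*A2 - a1*B1 - a2*B2) - a2*(b2*A1 - b1*A2 + a2*B1 - a1*B2))) by ring.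
      rewrite Hs, He1, He2 in G. apply (Rmult_eq_reg_r (a1*a1+a2*a2)); [|lra]. rewrite G. field; lra.
    + assert (G : B2*(a1*a1+a2*a2) = (a1*A1+a2*A2)*b2 + (a2*A1 - a1*A2)*b1 - (a1*(b2*A1 - b1*A2 + a2*B1 - a1*B2) + a2*(b1*A1+b2*A2 - a1*B1 - a2*B2))) by ring.
      rewrite Hs, He1, He2 in G. apply (Rmult_eq_reg_r (a1*a1+a2*a2)); [|lra]. rewrite G. field; lra.
Qed.

Definition dfun (i j : nat) (a b : R) : nat -> R := fun k => if k =? i then a else if k =? j then b else 1.

Definition Ff (r : R) (i j : nat) (si sj : R) (d : nat -> R) : R := Rpower (d i) r * si + Rpower (d j) r * sj.

Lemma Rpower_one r : Rpower 1 r = 1.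
Proof. unfold Rpower. rewrite ln_1, Rmult_0_r. apply exp_0. Qed.
Lemma Rpower_pos x r : 0 < Rpower x r.
Proof. unfold Rpower. apply exp_pos. Qed.

Lemma real_ineq r i j : i <> j -> (r < 0 \/ (0 < r /\ r < 1)) ->
  exists a1 b1 a2 b2 lam si sj, 0 < a1 /\ 0 < b1 /\ 0 < a2 /\ 0 < b2 /\ 0 <= lam <= 1 /\
   let d1 := dfun i j a1 b1 in let d2 := dfun i j a2 b2 in
   lam * (Ff r i j si sj d1)^2 + (1-lam) * (Ff r i j si sj d2)^2
     - (Ff r i j si sj (fun k => lam * d1 k + (1-lam) * d2 k))^2 < 0.
Proof.
  intros Hij [Hr|[Hr0 Hr1]].
  - set (T := Rpower 4 (- / r)).
    assert (HT : 1 < T).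
    { unfold T. rewrite <- (Rpower_O 4) by lra. apply Rpower_lt; [lra|].
      assert (0 < - / r). { apply Ropp_0_gt_lt_contravar. apply Rinv_lt_0_compat; auto. } lra. }
    set (t := 2*T - 1).
    assert (Ht : 1 < t) by (unfold t; lra).
    assert (HTr : Rpower T r = / 4).
    { unfold T. rewrite Rpower_mult. replace (- / r * r) with (- (1)) by (field; lra).
      rewrite Rpower_Ropp, Rpower_1 by lra. reflexivity. }
    assert (Htr : 0 < Rpower t r < 1).
    { split. apply Rpower_pos. unfold Rpower. rewrite <- exp_0. apply exp_increasing.
      assert (0 < ln t) by (rewrite <- ln_1; apply ln_increasing; lra). nra. }
    exists 1, 1, t, 1, (1/2), 1, (-1).
    repeat split; try lra. simpl. unfold Ff, dfun. rewrite !Nat.eqb_refl.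
    destruct (Nat.eqb_spec j i); [lia|].
    replace (1/2*1 + (1-1/2)*t) with T by (unfold t; field).
    replace (1/2*1 + (1-1/2)*1) with 1 by field.
    rewrite HTr, !Rpower_one. replace (/ 4) with (1/4) by field. set (p := Rpower t r) in *. assert (p*p < 1) by nra. nra.
  - set (Q := Rpower 2 (1 - r)).
    assert (HQ : 1 < Q).
    { unfold Q. assert (Rpower 2 0 < Rpower 2 (1-r)) by (apply Rpower_lt; lra). rewrite Rpower_O in H by lra. exact H. }
    set (del := (Q - 1)/2).
    assert (Hdel : 0 < del) by (unfold del; lra).
    set (eps := Rpower del (/ r)).
    assert (Heps : Rpower eps r = del).
    { unfold eps. rewrite Rpower_mult. replace (/ r * r) with 1 by (field; lra). apply Rpower_1; auto. }
    assert (Hhalf : 2 * Rpower (/2) r = Q).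
    { unfold Q, Rpower. rewrite ln_Rinv by lra. rewrite Rmult_minus_distr_r, Rmult_1_l.
      unfold Rminus. rewrite exp_plus, exp_ln by lra.
      replace (r * - ln 2) with (- (r * ln 2)) by ring. reflexivity. }
    set (m := 1/2 * eps + (1 - 1/2) * 1).
    assert (Hm : / 2 <= m).
    { unfold m. assert (0 < eps) by apply Rpower_pos. lra. }
    assert (Hmr : Rpower (/2) r <= Rpower m r).
    { apply Rle_Rpower_l; lra. }
    exists eps, 1, 1, eps, (1/2), 1, 1.
    repeat split; try lra; try apply Rpower_pos. simpl. unfold Ff, dfun. rewrite !Nat.eqb_refl.
    destruct (Nat.eqb_spec j i); [lia|].
    replace (1/2 * 1 + (1 - 1/2) * eps) with m by (unfold m; field).
    replace (1/2 * eps + (1 - 1/2) * 1) with m by (unfold m; field).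
    rewrite Heps, !Rpower_one.
    assert (Rpower m r * 1 + Rpower m r * 1 > del * 1 + 1 * 1) by (unfold del; lra).
    assert (0 < del * 1 + 1 * 1) by lra.
    nra.
Qed.

Lemma dfun_pos i j a b : 0 < a -> 0 < b -> forall k, 0 < dfun i j a b k.
Proof. intros. unfold dfun. destruct (k =? i); [|destruct (k =? j)]; lra. Qed.

Lemma core n r i j cc ss Y u w c :
  (r < 0 \/ (0 < r /\ r < 1)) ->
  (i < n)%nat -> (j < n)%nat -> i <> j -> cc*cc + ss*ss = 1 ->
  meq n Y (fun a b => Cmul (u a) (Cconj (w b))) ->
  veq n w (fun k => Cmul (RtoC c) (u k)) -> 0 < c ->
  mv n (adj (Umat i j cc ss)) u i <> C0 -> mv n (adj (Umat i j cc ss)) u j <> C0 ->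
  exists (X1 X2 : Mat) (lam : R),
    pd n X1 /\ pd n X2 /\ 0 <= lam <= 1 /\
    ~ loewner_le n
        (sandwich n r Y (madd (mscale lam X1) (mscale (1 - lam) X2)))
        (madd (mscale lam (sandwich n r Y X1))
              (mscale (1 - lam) (sandwich n r Y X2))).
Proof.
  intros Hr Hi Hj Hij Hcs HY Hw Hc Hli Hlj.
  destruct (real_ineq r i j Hij Hr) as (a1 & b1 & a2 & b2 & lam & si & sj & Ha1 & Hb1 & Ha2 & Hb2 & Hlam & Hineq).
  simpl in Hineq.
  set (U := Umat i j cc ss) in *.
  destruct (U_unitary n i j cc ss Hi Hj Hij Hcs) as [HU1 HU2]. fold U in HU1, HU2.
  set (d1 := dfun i j a1 b1) in *. set (d2 := dfun i j a2 b2) in *.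
  assert (Hd1 : forall k, (k<n)%nat -> 0 < d1 k) by (intros; apply dfun_pos; auto).
  assert (Hd2 : forall k, (k<n)%nat -> 0 < d2 k) by (intros; apply dfun_pos; auto).
  set (dm := fun k => lam * d1 k + (1 - lam) * d2 k).
  assert (Hdm : forall k, (k<n)%nat -> 0 < dm k).
  { intros k Hk. unfold dm. specialize (Hd1 k Hk). specialize (Hd2 k Hk). destruct Hlam.
    destruct (Req_dec lam 0). subst; lra. nra. }
  exists (Xof n U d1), (Xof n U d2), lam.
  split; [apply pd_X; auto|]. split; [apply pd_X; auto|]. split; [auto|].
  intros H. destruct (H (mv n U (zeta i j si sj (mv n (adj U) u)))) as [_ Hre].
  rewrite quad_msub, quad_madd, !quad_mscale in Hre.
  unfold U in Hre.
  rewrite (quad_S n r i j cc ss Y u w c si sj d1) in Hre by (auto; reflexivity).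
  rewrite (quad_S n r i j cc ss Y u w c si sj d2) in Hre by (auto; reflexivity).
  rewrite (quad_S n r i j cc ss Y u w c si sj dm) in Hre by (auto; apply X_lin).
  simpl in Hre. unfold Ff in Hineq. fold dm in Hineq.
  set (F1 := Rpower (d1 i) r * si + Rpower (d1 j) r * sj) in *.
  set (F2 := Rpower (d2 i) r * si + Rpower (d2 j) r * sj) in *.
  set (Fm := Rpower (dm i) r * si + Rpower (dm j) r * sj) in *.
  change (Rpower (lam * d1 i + (1 - lam) * d2 i) r * si + Rpower (lam * d1 j + (1 - lam) * d2 j) r * sj) with Fm in Hineq.
  assert (Hx : lam * (F1*F1) + (1-lam) * (F2*F2) - Fm*Fm < 0) by (ring_simplify in Hineq; ring_simplify; lra).
  assert (Hy : 0 <= c * (lam * (F1*F1) + (1-lam) * (F2*F2) - Fm*Fm)) by (ring_simplify in Hre; ring_simplify; lra).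
  nra.
Qed.

Lemma ell_val n i j cc ss u k : (i < n)%nat -> (j < n)%nat -> i <> j -> (k < n)%nat ->
  mv n (adj (Umat i j cc ss)) u k = Uvec i j cc ss u k.
Proof. intros. rewrite (mv_ext n _ (Umat i j cc ss) u u) by (auto; try apply adj_U; intros m _; reflexivity).
  apply mv_U; auto. Qed.

Lemma RC_nz x a : x <> 0 -> a <> C0 -> Cmul (RtoC x) a <> C0.
Proof. intros Hx Ha H. apply Hx. eapply RC_zero; eauto. Qed.

Theorem lemma3p4 (r : R) (n : nat) (Y : Mat) :
  (r < 0 \/ (0 < r /\ r < 1)) ->
  (2 <= n)%nat ->
  psd n Y ->
  rank_one n Y ->
  exists (X1 X2 : Mat) (lam : R),
    pd n X1 /\ pd n X2 /\ 0 <= lam <= 1 /\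
    ~ loewner_le n
        (sandwich n r Y (madd (mscale lam X1) (mscale (1 - lam) X2)))
        (madd (mscale lam (sandwich n r Y X1))
              (mscale (1 - lam) (sandwich n r Y X2))).
Proof.
  intros Hr Hn Hpsd [u [w [[i0 [Hi0 Hui]] [[k0 [Hk0 Hwk0]] HY]]]].
  set (j0 := if i0 =? 0 then 1%nat else 0%nat).
  assert (Hj0 : (j0 < n)%nat /\ j0 <> i0).
  { unfold j0. destruct (Nat.eqb_spec i0 0); lia. }
  destruct Hj0 as [Hj0 Hij].
  pose proof (rank1_psd_pair n Y u w i0 j0 Hpsd HY Hi0 Hj0 (not_eq_sym Hij) Hui) as P0.
  cbv zeta in P0. destruct P0 as [Ht [Hwi _]].
  set (t := Re (u i0) * Re (w i0) + Im (u i0) * Im (w i0)) in *.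
  set (N := normC (u i0)) in *.
  assert (Hall : veq n w (fun k => Cmul (RtoC (t / N)) (u k))).
  { intros k Hk. destruct (Nat.eq_dec k i0). subst; auto.
    pose proof (rank1_psd_pair n Y u w i0 k Hpsd HY Hi0 Hk (not_eq_sym n0) Hui) as P1.
    cbv zeta in P1. apply P1. }
  assert (HN : 0 < N).
  { unfold N, normC. destruct (u i0) as [a1 a2]. simpl.
    destruct (Req_dec a1 0), (Req_dec a2 0). subst. exfalso; apply Hui; reflexivity.
    all: try (assert (0 < a1*a1) by (apply Rsqr_pos_lt; auto)); try (assert (0 < a2*a2) by (apply Rsqr_pos_lt; auto)); nra. }
  assert (Hc : 0 < t / N).
  { destruct (Req_dec t 0) as [Ht0|Ht0].
    - exfalso. apply Hwk0. rewrite Hall by auto. rewrite Ht0. apply C_eq; simpl; field; lra.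
    - apply Rdiv_lt_0_compat; lra. }
  destruct (classic (u j0 = C0)) as [Huj|Huj].
  - assert (Hs : sqrt (/2) * sqrt (/2) = /2) by (apply sqrt_sqrt; lra).
    assert (Hs0 : sqrt (/2) <> 0) by (apply Rgt_not_eq, sqrt_lt_R0; lra).
    apply (core n r i0 j0 (sqrt (/2)) (sqrt (/2)) Y u w (t / N)); auto; try lra.
    + rewrite ell_val by auto. unfold Uvec. rewrite Nat.eqb_refl. rewrite Huj.
      replace (Cadd (Cmul (RtoC (sqrt (/ 2))) (u i0)) (Cmul (RtoC (sqrt (/ 2))) C0)) with (Cmul (RtoC (sqrt (/ 2))) (u i0)) by ring.
      apply RC_nz; auto.
    + rewrite ell_val by auto. unfold Uvec. destruct (Nat.eqb_spec j0 i0); [lia|]. rewrite Nat.eqb_refl. rewrite Huj.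
      replace (Cadd (Cmul (RtoC (sqrt (/ 2))) (u i0)) (Copp (Cmul (RtoC (sqrt (/ 2))) C0))) with (Cmul (RtoC (sqrt (/ 2))) (u i0)) by ring.
      apply RC_nz; auto.
  - apply (core n r i0 j0 1 0 Y u w (t / N)); auto; try lra.
    + rewrite ell_val by auto. unfold Uvec. rewrite Nat.eqb_refl.
      replace (Cadd (Cmul (RtoC 1) (u i0)) (Cmul (RtoC 0) (u j0))) with (u i0); auto.
      apply C_eq; destruct (u i0), (u j0); simpl; ring.
    + rewrite ell_val by auto. unfold Uvec. destruct (Nat.eqb_spec j0 i0); [lia|]. rewrite Nat.eqb_refl.
      replace (Cadd (Cmul (RtoC 0) (u i0)) (Copp (Cmul (RtoC 1) (u j0)))) with (Cmul (RtoC (-1)) (u j0)).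
      apply RC_nz; auto; lra.
      apply C_eq; destruct (u i0), (u j0); simpl; ring.
Qed.
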